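(* Let $G$ be a connected graph, and let $L$ be a list-assignment with $|L(u)|\ge\deg(u)+1$ for all $u\in V(G)$ and $|L(v)|\ge\deg(v)+2$ for some vertex $v$. Let $\alpha,\beta$ be two unfrozen $L$-colourings. Fix $w\in V(G)$ and let $P$ be a shortest $v,w$-path. There exists a recolouring sequence $\mathcal{S}$ from $\alpha$ to some $L$-colouring $\gamma$ such that (i) $\gamma(w)=\beta(w)$, (ii) $v$ is unfrozen under $\gamma$, (iii) every vertex recoloured during $\mathcal{S}$ belongs to $V(P)\cup(N(w)\cap\alpha^{-1}(\beta(w)))$, and (iv) $|\mathcal{S}|\le\deg(w)+2+2|V(P)|$.
   Context: An $L$-colouring is a proper colouring $\varphi$ with $\varphi(v)\in L(v)$ for all $v$. A recolouring sequence is a sequence of single-vertex recolouring steps, each changing the colour of one vertex to another colour of its list so that the colouring remains proper; $|\mathcal{S}|$ is its number of steps. A vertex $u$ is frozen under $\varphi$ if every colour of $L(u)\setminus\{\varphi(u)\}$ appears on a neighbour of $u$, and unfrozen otherwise; a colouring is unfrozen if some vertex is unfrozen under it. *)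

(* Defs.v *)
From mathcomp Require Import all_boot.
Set Implicit Arguments. Unset Strict Implicit. Unset Printing Implicit Defensive.

Section Defs.
Variables (T C : finType).

Definition simple_graph (e : rel T) : Prop := symmetric e /\ irreflexive e.
Definition connected_graph (e : rel T) : Prop := forall x y, connect e x y.

Definition deg (e : rel T) (u : T) : nat := #|[set x | e u x]|.

Definition Lcolouring (e : rel T) (L : T -> {set C}) (phi : T -> C) : Prop :=
  (forall u, phi u \in L u) /\ (forall u x, e u x -> phi u != phi x).

Definition frozen (e : rel T) (L : T -> {set C}) (phi : T -> C) (u : T) : Prop :=
  forall c, c \in L u -> c != phi u -> exists x, e u x /\ phi x = c.
Definition unfrozen e L phi u : Prop := ~ frozen e L phi u.
Definition unfrozen_colouring e L phi : Prop := exists u, unfrozen e L phi u.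

Definition recolour (phi : T -> C) (x : T) (c : C) : T -> C :=
  fun y => if y == x then c else phi y.

Fixpoint recol_seq (e : rel T) (L : T -> {set C}) (phi : T -> C)
    (s : seq (T * C)) : Prop :=
  match s with
  | [::] => True
  | (x, c) :: s' => c != phi x /\ Lcolouring e L (recolour phi x c)
                    /\ recol_seq e L (recolour phi x c) s'
  end.

Definition recol_final (phi : T -> C) (s : seq (T * C)) : T -> C :=
  foldl (fun f p => recolour f p.1 p.2) phi s.

Definition shortest_path (e : rel T) (v w : T) (p : seq T) : Prop :=
  path e v p /\ last v p = w /\
  forall q, path e v q -> last v q = w -> size p <= size q.

End Defs.

(* Main.v *)
Require Import Defs.
From mathcomp Require Import all_boot zify.
Set Implicit Arguments. Unset Strict Implicit. Unset Printing Implicit Defensive.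

Section Work.
Variables (T C : finType) (e : rel T) (L : T -> {set C}).
Hypothesis esym : symmetric e.
Hypothesis eirr : irreflexive e.
Hypothesis Lbig : forall u, deg e u + 1 <= #|L u|.

Local Notation col := (Lcolouring e L).

Definition Reach (A : pred T) (phi psi : T -> C) (n : nat) : Prop :=
  exists s, recol_seq e L phi s /\ recol_final phi s = psi /\ size s <= n /\
    forall st, st \in s -> A st.1.

Lemma recol_seq_cat phi s1 s2 :
  recol_seq e L phi s1 -> recol_seq e L (recol_final phi s1) s2 ->
  recol_seq e L phi (s1 ++ s2).
Proof.
elim: s1 phi => [|[x c] s IH] phi //= [h1 [h2 h3]] h4.
by split=> //; split=> //; apply: IH.
Qed.

Lemma Reach_refl (A : pred T) phi : Reach A phi phi 0.
Proof. by exists [::]. Qed.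

Lemma Reach_trans (A B : pred T) phi psi chi n m :
  Reach A phi psi n -> Reach B psi chi m -> {subset B <= A} ->
  Reach A phi chi (n + m).
Proof.
move=> [s1 [r1 [f1 [z1 a1]]]] [s2 [r2 [f2 [z2 a2]]]] sub.
exists (s1 ++ s2); split; first by apply: recol_seq_cat => //; rewrite f1.
split; first by rewrite /recol_final foldl_cat -/(recol_final phi s1) f1.
split; first by rewrite size_cat; apply: leq_add.
move=> st; rewrite mem_cat => /orP [] h; first by apply: a1.
by apply: sub; apply: a2.
Qed.

Lemma Reach_mono (A B : pred T) phi psi n m :
  Reach A phi psi n -> {subset A <= B} -> n <= m -> Reach B phi psi m.
Proof.
move=> [s [r [f [z a]]]] sub nm; exists s; do 3! (split => //).
  by apply: leq_trans nm.
by move=> st h; apply: sub; apply: a.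
Qed.

Lemma Reach_step (A : pred T) phi x d :
  A x -> d != phi x -> col (recolour phi x d) -> Reach A phi (recolour phi x d) 1.
Proof.
move=> Ax dn cl; exists [:: (x, d)] => /=; split; first by [].
split; first by [].
split; first by [].
by move=> st; rewrite inE => /eqP ->.
Qed.

Lemma Reach_col (A : pred T) phi psi n : col phi -> Reach A phi psi n -> col psi.
Proof.
move=> cp [s [r [f _]]]; rewrite -f; clear f.
elim: s phi cp r => [|[x c] s IH] phi cp //= [_ [h1 h2]].
exact: IH.
Qed.

Lemma Reach_agree (A : pred T) phi psi n : Reach A phi psi n -> forall y, ~~ A y -> psi y = phi y.
Proof.
move=> [s [_ [f [_ a]]]] y ny; rewrite -f; clear f.
elim: s phi a => [|[x c] s IH] phi a //=.
rewrite IH; last by move=> st h; apply: a; rewrite inE h orbT.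
rewrite /recolour; case: eqP => // yx.
have := a (x, c); rewrite inE eqxx => /(_ isT) /= Ax.
by move: ny; rewrite yx Ax.
Qed.

Definition frozenb phi y :=
  ~~ [exists c, [&& c \in L y, c != phi y & [forall x, e y x ==> (phi x != c)]]].

Lemma frozenP phi y : reflect (frozen e L phi y) (frozenb phi y).
Proof.
apply: (iffP idP).
  move=> /existsPn h c cL cn.
  have := h c; rewrite cL cn /= => /forallPn [x]; rewrite negb_imply negbK => /andP [exy /eqP pxc].
  by exists x.
move=> fr; apply/existsPn => c; apply/negP => /and3P [cL cn /forallP fa].
have [x [exy pxc]] := fr c cL cn.
by have := fa x; rewrite exy pxc eqxx.
Qed.

Lemma spare_of phi y : unfrozen e L phi y ->
  exists d, [/\ d \in L y, d != phi y & forall x, e y x -> phi x != d].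
Proof.
move=> uf; case fb: (frozenb phi y); first by case: uf; apply/frozenP.
move: fb => /negbFE /existsP [d /and3P [dL dn /forallP fa]].
by exists d; split => // x exy; have := fa x; rewrite exy.
Qed.

Lemma unfrozen_of phi y d : d \in L y -> d != phi y -> (forall x, e y x -> phi x != d) ->
  unfrozen e L phi y.
Proof.
move=> dL dn fa fr; have [x [exy pxd]] := fr d dL dn.
by have := fa x exy; rewrite pxd eqxx.
Qed.

Lemma frozen_local phi psi y : psi y = phi y -> (forall x, e y x -> psi x = phi x) ->
  frozen e L phi y -> frozen e L psi y.
Proof.
move=> hy hx fr c cL cn; rewrite hy in cn; have [x [exy pxc]] := fr c cL cn.
by exists x; rewrite hx.
Qed.

Lemma recolour_col phi y d : col phi -> d \in L y -> (forall x, e y x -> phi x != d) ->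
  col (recolour phi y d).
Proof.
move=> [cL ce] dL fa; split.
  by move=> u; rewrite /recolour; case: eqP => [->|_].
move=> u x eux; rewrite /recolour.
case: (eqVneq u y) => [uy|uy]; case: (eqVneq x y) => [xy|xy].
- by move: eux; rewrite uy xy eirr.
- by rewrite eq_sym; apply: fa; rewrite -uy.
- by apply: fa; rewrite esym -xy.
- exact: ce.
Qed.

Lemma frozen_struct phi y : col phi -> frozen e L phi y ->
  (forall z, e y z -> phi z \in L y) /\ {in [set x | e y x] &, injective phi}.
Proof.
move=> cp fr.
set N := [set x | e y x]; set S := L y :\ phi y.
have sub : S \subset phi @: N.
  apply/subsetP => c; rewrite !inE => /andP [cn cL].
  have [x [exy pxc]] := fr c cL cn; apply/imsetP; exists x; rewrite ?inE //.
have cS : #|N| <= #|S|.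
  have := Lbig y; rewrite /deg -/N (cardsD1 (phi y) (L y)) -/S.
  by case: (phi y \in L y) => /=; lia.
have ci : #|phi @: N| <= #|N| := leq_imset_card _ _.
have eqS : S = phi @: N.
  apply/eqP; rewrite eqEcard sub /=; apply: leq_trans ci cS.
split.
  move=> z eyz; have : phi z \in S by rewrite eqS; apply/imsetP; exists z; rewrite ?inE.
  by rewrite inE => /andP [].
apply/imset_injP; rewrite eqn_leq ci /= -eqS; exact: cS.
Qed.

Lemma frozen_change phi psi y z : col phi -> frozen e L phi y -> e y z ->
  psi y = phi y -> psi z != phi z -> (forall x, e y x -> x != z -> psi x = phi x) ->
  [/\ phi z \in L y, phi z != psi y & forall x, e y x -> psi x != phi z].
Proof.
move=> cp fr eyz hy hz hx; have [inL inj] := frozen_struct cp fr.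
split; first exact: inL eyz.
  rewrite hy eq_sym; exact: cp.2 _ _ eyz.
move=> x eyx; case: (eqVneq x z) => [->//|xz].
rewrite hx //; apply/eqP => h; move: xz; rewrite (inj x z) ?inE ?eqxx //.
Qed.

Lemma frozen_change_unf phi psi y z : col phi -> frozen e L phi y -> e y z ->
  psi y = phi y -> psi z != phi z -> (forall x, e y x -> x != z -> psi x = phi x) ->
  unfrozen e L psi y.
Proof.
move=> cp fr eyz hy hz hx; have [h1 h2 h3] := frozen_change cp fr eyz hy hz hx.
exact: unfrozen_of h1 h2 h3.
Qed.

Lemma big_unfrozen phi v : deg e v + 2 <= #|L v| -> unfrozen e L phi v.
Proof.
move=> hv fr.
set N := [set x | e v x]; set S := L v :\ phi v.
have sub : S \subset phi @: N.
  apply/subsetP => c; rewrite !inE => /andP [cn cL].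
  have [x [exy pxc]] := fr c cL cn; apply/imsetP; exists x; rewrite ?inE //.
have := subset_leq_card sub; have := leq_imset_card phi N.
move: hv; rewrite /deg -/N (cardsD1 (phi v) (L v)) -/S.
by case: (phi v \in L v) => /=; lia.
Qed.


Lemma claimA (q0 : T) (q : seq T) : (forall phi, unfrozen e L phi q0) -> path e q0 q ->
  forall phi, col phi -> exists psi,
    Reach [pred y | y \in belast q0 q] phi psi (size q) /\ unfrozen e L psi (last q0 q).
Proof.
move=> u0; elim/last_ind: q => [|q z IH] /=.
  move=> _ phi cp; exists phi; split; [exact: Reach_refl | exact: u0].
rewrite rcons_path => /andP [pq ez] phi cp.
have [psi1 [R1 U1]] := IH pq phi cp.
have cp1 := Reach_col cp R1.
rewrite last_rcons belast_rcons size_rcons.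
have R1' : Reach [pred y | y \in q0 :: q] phi psi1 (size q).
  by apply: Reach_mono R1 _ (leqnn _) => y /=; apply: mem_belast.
case fb: (frozenb psi1 z); last first.
  exists psi1; split; first by apply: Reach_mono R1' _ _.
  by move=> fr; move/frozenP: fr; rewrite fb.
have [d [dL dn fa]] := spare_of U1.
have cp2 := recolour_col cp1 dL fa.
exists (recolour psi1 (last q0 q) d); split.
  rewrite -addn1; apply: Reach_trans R1' (Reach_step (A := [pred y | y \in q0 :: q]) _ dn cp2) _ => //.
  by rewrite /= (mem_last q0 q).
have zm : z != last q0 q by apply/eqP => zm; move: ez; rewrite zm eirr.
apply: (frozen_change_unf (phi:=psi1) (z:=last q0 q)) cp1 (elimT (frozenP _ _) fb) _ _ _ _.
- by rewrite esym.
- by rewrite /recolour (negbTE zm).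
- by rewrite /recolour eqxx.
- by move=> x _ xm; rewrite /recolour (negbTE xm).
Qed.

Lemma last_take_nth (v : T) p n : n <= size p -> last v (take n p) = nth v (v :: p) n.
Proof.
move=> np; rewrite -nth_last size_takel //; case: n np => [|n] np /=; [by rewrite take0 | by rewrite nth_take].
Qed.

Lemma mem_belast_pos (v : T) s y : y \in belast v s -> exists2 j, j < size s & y = nth v (v :: s) j.
Proof.
elim: s v => [|x s IH] v //=; rewrite inE => /orP [/eqP ->|h]; first by exists 0.
have [j jl ->] := IH x h; exists j.+1 => //=.
by apply: set_nth_default; rewrite /= ltnS ltnW.
Qed.

Lemma belast_take_pos (v : T) p n y : n <= size p -> y \in belast v (take n p) ->
  exists2 j, j < n & y = nth v (v :: p) j.
Proof.
move=> np /mem_belast_pos [j]; rewrite size_takel // => jn ->; exists j => //.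
case: j jn => [|j] jn /=; first by []. by rewrite nth_take // ltnW.
Qed.

Lemma sp_far v w p i j : shortest_path e v w p -> i <= size p -> j <= size p ->
  (nth v (v::p) i = nth v (v::p) j \/ e (nth v (v::p) i) (nth v (v::p) j)) -> j <= i.+1.
Proof.
move=> [pp [lw mn]] ip jp h.
rewrite leqNgt; apply/negP => lt.
have pj : path e (nth v (v::p) j) (drop j p).
  by move: pp; rewrite -{1}(cat_take_drop j p) cat_path last_take_nth // => /andP [].
have pi : path e v (take i p) := take_path i pp.
have lj : last (nth v (v::p) j) (drop j p) = w.
  by rewrite -last_take_nth // -last_cat cat_take_drop.
case: h => h.
  have := mn (take i p ++ drop j p).
  rewrite cat_path pi last_take_nth // h pj last_cat last_take_nth // h lj.
  rewrite size_cat size_takel // size_drop => /(_ isT erefl); lia.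
case: j jp lt pj lj h => [|j] jp lt pj lj h; first by [].
have := mn (take i p ++ drop j p).
have jl : j < size p by lia.
rewrite (drop_nth v jl) cat_path pi last_take_nth // /=.
rewrite -[nth v p j]/(nth v (v :: p) j.+1) h pj last_cat /= lj.
rewrite size_cat size_takel // /= size_drop => /(_ isT erefl); lia.
Qed.


Definition cn (w : T) (c : C) (phi : T -> C) := [set y | e w y && (phi y == c)].

Lemma phaseA_none w c phi : col phi ->
  ~~ [exists y, (y \in cn w c phi) && ~~ frozenb phi y] ->
  exists psi,
  [/\ Reach [pred y | y \in cn w c phi] phi psi (#|cn w c phi| - #|cn w c psi|),
      #|cn w c psi| <= #|cn w c phi|, col psi &
      forall y, y \in cn w c psi -> [/\ y \in cn w c phi, frozen e L phi y & frozen e L psi y]].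
Proof.
move=> cp /existsPn none; exists phi; split => //.
- by rewrite subnn; apply: Reach_refl.
- move=> y yin; have := none y; rewrite yin /= negbK => /frozenP fr; by split.
Qed.

Lemma phaseA w c : forall n phi, #|cn w c phi| <= n -> col phi -> exists psi,
  [/\ Reach [pred y | y \in cn w c phi] phi psi (#|cn w c phi| - #|cn w c psi|),
      #|cn w c psi| <= #|cn w c phi|, col psi &
      forall y, y \in cn w c psi -> [/\ y \in cn w c phi, frozen e L phi y & frozen e L psi y]].
Proof.
elim=> [|n IH] phi hn cp;
  (case: (boolP [exists y, (y \in cn w c phi) && ~~ frozenb phi y]) =>
     [/existsP [y /andP [yin yu]]|none]; last exact: phaseA_none).
  have : 0 < #|cn w c phi| by apply/card_gt0P; exists y.
  by move: hn; rewrite leqn0 => /eqP ->.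
have uf : unfrozen e L phi y by move=> /frozenP fr; move: yu; rewrite fr.
have [d [dL dn fa]] := spare_of uf.
have cp1 := recolour_col cp dL fa.
set phi1 := recolour phi y d.
have pyc : phi y = c by move: yin; rewrite inE => /andP [_ /eqP].
have sub1 : forall z, z \in cn w c phi1 -> z != y /\ z \in cn w c phi.
  move=> z; rewrite !inE /phi1 /recolour; case: (eqVneq z y) => [->|zy].
    by move=> /andP [_ /eqP dc]; move: dn; rewrite pyc dc eqxx.
  by [].
have card1 : #|cn w c phi1| < #|cn w c phi|.
  rewrite (cardsD1 y (cn w c phi)) yin add1n ltnS; apply: subset_leq_card.
  by apply/subsetP => z /sub1 [zy zin]; rewrite !inE zy; rewrite inE in zin.
have hn1 : #|cn w c phi1| <= n by lia.
have [psi [R cl cpsi F]] := IH phi1 hn1 cp1.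
exists psi; split => //.
- have R0 := Reach_step (A := [pred z | z \in cn w c phi]) yin dn cp1.
  have := Reach_trans R0 R _; rewrite -/phi1 => /(_ _) RR.
  apply: Reach_mono (RR _) _ _ => //; first by move=> z /= /sub1 [].
  lia.
- lia.
- move=> z /F [zin fr1 frp]; have [zy zin0] := sub1 z zin; split => //.
  apply: (frozen_local (phi := phi1)) fr1.
  + by rewrite /phi1 /recolour (negbTE zy).
  + move=> x ezx; rewrite /phi1 /recolour; case: (eqVneq x y) => [xy|//].
    have := cp.2 z x ezx; rewrite xy pyc.
    by move: zin0; rewrite inE => /andP [_ /eqP ->]; rewrite eqxx.
Qed.

Lemma finish1 w c phi : col phi -> c \in L w -> c != phi w ->
  (forall y, y \in cn w c phi -> unfrozen e L phi y) ->
  exists psi, [/\ Reach [pred y | (y \in cn w c phi) || (y == w)] phi psi (#|cn w c phi| + 1),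
                  psi w = c & col psi].
Proof.
move=> cp cL cn0 uf.
have [phi1 [R cl cp1 F]] := @phaseA w c _ phi (leqnn _) cp.
have emp : forall y, y \notin cn w c phi1.
  by move=> y; apply/negP => /F [yin fr _]; exact: uf y yin fr.
have pw : phi1 w = phi w by apply: (Reach_agree R); rewrite /= inE eirr.
have fa : forall x, e w x -> phi1 x != c.
  by move=> x ewx; apply/negP => /eqP pxc; have := emp x; rewrite inE ewx pxc eqxx.
have cp2 := recolour_col cp1 cL fa.
have cn1 : c != phi1 w by rewrite pw.
exists (recolour phi1 w c); split => //; last by rewrite /recolour eqxx.
have R' : Reach [pred y | (y \in cn w c phi) || (y == w)] phi phi1 (#|cn w c phi| - #|cn w c phi1|).
  by apply: Reach_mono R _ _ => // y; rewrite !inE => ->.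
have Aw : [pred y | (y \in cn w c phi) || (y == w)] w by rewrite /= eqxx orbT.
have RR := Reach_trans R' (Reach_step Aw cn1 cp2) (fun y h => h).
by apply: Reach_mono RR _ _ => //; lia.
Qed.

Lemma finish2 w c phi : col phi -> c \in L w -> c != phi w -> unfrozen e L phi w ->
  (forall y, y \in cn w c phi -> frozen e L phi y) ->
  exists psi, [/\ Reach [pred y | (y \in cn w c phi) || (y == w)] phi psi (#|cn w c phi| + 2),
                  psi w = c & col psi].
Proof.
move=> cp cL cn0 uw fr.
case: (set_0Vmem (cn w c phi)) => [E|[y0 y0in]].
  have [psi [R pw cpsi]] : exists psi, [/\ Reach [pred y | (y \in cn w c phi) || (y == w)] phi psi (#|cn w c phi| + 1),
                  psi w = c & col psi].
    by apply: (finish1 cp cL cn0) => y; rewrite E inE.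
  by exists psi; split => //; apply: Reach_mono R (fun y h => h) _; lia.
have [d [dL dn fa]] := spare_of uw.
have dc : d != c.
  by move: y0in; rewrite inE => /andP [ewy /eqP <-]; rewrite eq_sym; apply: fa.
have cp1 := recolour_col cp dL fa.
set phi1 := recolour phi w d.
have cnE : cn w c phi1 = cn w c phi.
  apply/setP => y; rewrite !inE /phi1 /recolour; case: (eqVneq y w) => [->|//].
  by rewrite eirr.
have uf1 : forall y, y \in cn w c phi1 -> unfrozen e L phi1 y.
  move=> y; rewrite cnE => yin.
  have ywn : y != w by apply/eqP => yw; move: yin; rewrite yw inE eirr.
  have ewy : e w y by move: yin; rewrite inE => /andP [].
  apply: (frozen_change_unf (phi := phi) (z := w)) cp (fr y yin) _ _ _ _.
  - by rewrite esym.
  - by rewrite /phi1 /recolour (negbTE ywn).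
  - by rewrite /phi1 /recolour eqxx.
  - by move=> x _ xw; rewrite /phi1 /recolour (negbTE xw).
have cd : c != phi1 w by rewrite /phi1 /recolour eqxx eq_sym.
have [psi [R pw cpsi]] := finish1 cp1 cL cd uf1.
exists psi; split => //.
have Aw : [pred y | (y \in cn w c phi) || (y == w)] w by rewrite /= eqxx orbT.
have R0 := Reach_step Aw dn cp1.
rewrite cnE in R.
have RR := Reach_trans R0 R (fun y h => h).
by apply: Reach_mono RR (fun y h => h) _; lia.
Qed.

Lemma finish w c phi : col phi -> c \in L w -> c != phi w ->
  ((forall y, y \in cn w c phi -> unfrozen e L phi y) \/
   (unfrozen e L phi w /\ forall y, y \in cn w c phi -> frozen e L phi y)) ->
  exists psi, [/\ Reach [pred y | (y \in cn w c phi) || (y == w)] phi psi (#|cn w c phi| + 2),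
                  psi w = c & col psi].
Proof.
move=> cp cL cn0 [uf|[uw fr]]; last exact: finish2.
have [psi [R pw cpsi]] := finish1 cp cL cn0 uf.
by exists psi; split => //; apply: Reach_mono R (fun y h => h) _; lia.
Qed.


Lemma belast_take_mem (v : T) p n y : n <= size p -> y \in belast v (take n p) -> y \in v :: p.
Proof.
move=> np /(belast_take_pos np) [j jn ->]; apply: mem_nth => /=; lia.
Qed.

Ltac slia := repeat match goal with H : is_true (leq _ _) |- _ => revert H end;
  repeat match goal with H : _ |- _ => clear H end; intros; lia.

Lemma main_reach v w p alpha c : deg e v + 2 <= #|L v| -> col alpha -> c \in L w ->
  shortest_path e v w p ->
  exists gamma, Reach [pred y | (y \in v :: p) || (e w y && (alpha y == c))] alpha gamma
                  (deg e w + 2 + 2 * (size p).+1) /\ gamma w = c.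
Proof.
move=> hv ca cL sp.
set A := [pred y | (y \in v :: p) || (e w y && (alpha y == c))].
set bound := deg e w + 2 + 2 * (size p).+1.
have vU : forall phi, unfrozen e L phi v := fun phi => big_unfrozen (phi := phi) hv.
have [pp [lw mn]] := sp.
set k := size p.
have nodek : nth v (v :: p) k = w by rewrite -lw; exact: (nth_last v (v :: p)).
have wP : w \in v :: p by rewrite -lw mem_last.
have cnA : forall phi n, Reach A alpha phi n -> forall y, y \in cn w c phi -> A y.
  move=> phi n R y yin; apply/negPn/negP => nA; have eq := Reach_agree R nA.
  by move: yin; rewrite inE eq => /andP [h1 h2]; move: nA; rewrite /= h1 h2 orbT.
have finA : forall phi n, Reach A alpha phi n ->
    {subset [pred y | (y \in cn w c phi) || (y == w)] <= A}.
  move=> phi n R y /orP [/(cnA _ _ R) //|/eqP ->]; by rewrite inE wP.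
have fin : forall phi n, Reach A alpha phi n -> c != phi w ->
    ((forall y, y \in cn w c phi -> unfrozen e L phi y) \/
     (unfrozen e L phi w /\ forall y, y \in cn w c phi -> frozen e L phi y)) ->
    n + #|cn w c phi| + 2 <= bound ->
    exists gamma, Reach A alpha gamma bound /\ gamma w = c.
  move=> phi n R cw H le.
  have [psi [R' pw _]] := finish (Reach_col ca R) cL cw H.
  exists psi; split => //.
  by apply: Reach_mono (Reach_trans R R' (finA _ _ R)) (fun y h => h) _; slia.
case: (eqVneq (alpha w) c) => [awc|anc].
  by exists alpha; split => //; apply: Reach_mono (Reach_refl _ _) (fun y h => h) _.
have N0deg : #|cn w c alpha| <= deg e w.
  by apply: subset_leq_card; apply/subsetP => y; rewrite !inE => /andP [].
have [phi1 [R1 cl1 cp1 F1]] := @phaseA w c _ alpha (leqnn _) ca.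
have R1A : Reach A alpha phi1 (#|cn w c alpha| - #|cn w c phi1|).
  by apply: Reach_mono R1 _ (leqnn _) => y yin; apply/orP; right; rewrite inE in yin.
have pw1 : phi1 w = alpha w by apply: (Reach_agree R1); rewrite /= inE eirr.
have cn1 : c != phi1 w by rewrite pw1 eq_sym.
case fw1: (frozenb phi1 w); last first.
  apply: (fin _ _ R1A cn1); last by slia.
  right; split; first by move=> /frozenP; rewrite fw1.
  by move=> y /F1 [].
case: (set_0Vmem (cn w c phi1)) => [E|[x xin1]].
  apply: (fin _ _ R1A cn1); last by slia.
  by left => y; rewrite E inE.
move/frozenP: fw1 => wfr1.
have k1 : 0 < k.
  rewrite lt0n; apply/negP => /eqP /size0nil pe.
  by move: lw; rewrite pe /= => wv; apply: (vU phi1); rewrite wv.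
set P := v :: p.
have PS : forall j, j < k.+1 -> nth v P j \in P by move=> j jk; apply: mem_nth.
have edge : forall j, j < k -> e (nth v P j) (nth v P j.+1).
  by move=> j jk; exact: (pathP v pp) j jk.
set u := nth v P k.-1.
have ukw : e u w by rewrite -nodek /u -{2}(prednK k1); apply: edge; slia.
have uP : u \in P by apply: PS; slia.
have uw : u != w by apply/eqP => h; move: ukw; rewrite h eirr.
have ewu : e w u by rewrite esym.
have far : forall i j, i <= k -> j <= k -> (nth v P i = nth v P j \/ e (nth v P i) (nth v P j)) ->
    j <= i.+1.
  by move=> i j; exact: (sp_far sp).
have [phi2 [R2 U2]] := claimA vU (take_path k.-1 pp) cp1.
rewrite last_take_nth ?leq_pred // -/u in U2.
rewrite size_takel ?leq_pred // in R2.
have far1 : forall y, y \in belast v (take k.-1 p) -> y != w /\ ~~ e w y.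
  move=> y /(belast_take_pos (leq_pred _)) [j jl ->].
  have jk : j <= k by apply: ltnW; apply: leq_trans jl (leq_pred _).
  have kk : k <= k by [].
  have nk : ~ k <= j.+1 by move=> h2; slia.
  split.
    by apply/eqP => h; apply: nk; apply: far jk kk _; left; rewrite /P h nodek.
  by apply/negP => h; apply: nk; apply: far jk kk _; right; rewrite /P nodek esym.
have agree2 : forall y, (y == w) || e w y -> phi2 y = phi1 y.
  move=> y hy; apply: (Reach_agree R2); apply/negP => /far1 [h1 h2].
  by move: hy; rewrite (negbTE h1) (negbTE h2).
have R2' : Reach A phi1 phi2 k.-1.
  apply: (Reach_mono R2 _ (leqnn _)) => y yin.
  have := belast_take_mem (leq_pred _) yin => yP.
  by rewrite inE yP.
have R2A := Reach_trans R1A R2' (fun y h => h).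
have cp2 := Reach_col cp1 R2.
have cnE2 : cn w c phi2 = cn w c phi1.
  by apply/setP => y; rewrite !inE; case ewy: (e w y) => //=; rewrite agree2 // ewy orbT.
have wfr2 : frozen e L phi2 w.
  by apply: frozen_local wfr1; [apply: agree2; rewrite eqxx | move=> y ewy; apply: agree2; rewrite ewy orbT].
have [_ inj2] := frozen_struct cp2 wfr2.
have xin2 : x \in cn w c phi2 by rewrite cnE2.
have allx : forall y, y \in cn w c phi2 -> y = x.
  move=> y yin; apply: inj2; rewrite ?inE.
  - by move: yin; rewrite inE => /andP [].
  - by move: xin2; rewrite inE => /andP [].
  - by move: yin xin2; rewrite !inE => /andP [_ /eqP ->] /andP [_ /eqP ->].
have pw2 : phi2 w = phi1 w by apply: agree2; rewrite eqxx.
have cn2 : c != phi2 w by rewrite pw2.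
case fx2: (frozenb phi2 x); last first.
  apply: (fin _ _ R2A cn2); last by rewrite cnE2; slia.
  left => y /allx ->; by move=> /frozenP; rewrite fx2.
move/frozenP: fx2 => xfr2.
have ux : u != x by apply/eqP => h; apply: U2; rewrite h.
have pu2c : phi2 u != c.
  apply/eqP => h; move/eqP: ux; apply; apply: allx; by rewrite inE ewu h eqxx.
have [s0 [sL sn sfa]] := spare_of U2.
have cp3 := recolour_col cp2 sL sfa.
set phi3 := recolour phi2 u s0.
have R3A : Reach A alpha phi3 (#|cn w c alpha| - #|cn w c phi1| + k.-1 + 1).
  by apply: (Reach_trans R2A (Reach_step (A := A) _ sn cp3) (fun y h => h)); rewrite inE uP.
have wu : w != u by rewrite eq_sym.
have pw3 : phi3 w = phi2 w by rewrite /phi3 /recolour (negbTE wu).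
have [bL bn bfa] : [/\ phi2 u \in L w, phi2 u != phi3 w & forall x, e w x -> phi3 x != phi2 u].
  apply: (frozen_change cp2 wfr2 ewu pw3).
  - by rewrite /phi3 /recolour eqxx.
  - by move=> y _ yu; rewrite /phi3 /recolour (negbTE yu).
have cn3 : c != phi3 w by rewrite pw3.
have xu' : x != u by rewrite eq_sym.
have px3 : phi3 x = phi2 x by rewrite /phi3 /recolour (negbTE xu').
have px2c : phi2 x = c by move: xin2; rewrite inE => /andP [_ /eqP].
case: (eqVneq s0 c) => [sc|snc]; last first.
  have sub3 : forall y, y \in cn w c phi3 -> y \in cn w c phi2.
    move=> y; rewrite !inE /phi3 /recolour; case: (eqVneq y u) => [->|//].
    by rewrite (negbTE snc) andbF.
  have card3 : #|cn w c phi3| <= #|cn w c phi1|.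
    by rewrite -cnE2; apply: subset_leq_card; apply/subsetP => y /sub3.
  apply: (fin _ _ R3A cn3); last by slia.
  case fx3: (frozenb phi3 x).
    right; split; first by apply: unfrozen_of bL bn bfa.
    by move=> y /sub3 /allx ->; apply/frozenP.
  by left => y /sub3 /allx -> /frozenP; rewrite fx3.
have nxu : ~~ e x u.
  apply/negP => exu; have eux : e u x by rewrite esym.
  have := cp3.2 u x eux.
  by rewrite /phi3 /recolour eqxx (negbTE xu') sc px2c eqxx.
have xfr3 : frozen e L phi3 x.
  apply: (frozen_local (phi := phi2)) xfr2 => // z exz.
  have zu : z != u by apply/eqP => h; move: nxu; rewrite -h exz.
  by rewrite /phi3 /recolour (negbTE zu).
have cp4 := recolour_col cp3 bL bfa.
set b := phi2 u.
set phi4 := recolour phi3 w b.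
have R4A : Reach A alpha phi4 (#|cn w c alpha| - #|cn w c phi1| + k.-1 + 1 + 1).
  by apply: (Reach_trans R3A (Reach_step (A := A) _ bn cp4) (fun y h => h)); rewrite inE wP.
have xw : x != w by apply/eqP => h; move: xin2; rewrite h inE eirr.
have xuf4 : unfrozen e L phi4 x.
  apply: (frozen_change_unf cp3 xfr3 (z := w)).
  - by move: xin2; rewrite inE esym => /andP [].
  - by rewrite /phi4 /recolour (negbTE xw).
  - by rewrite /phi4 /recolour eqxx.
  - by move=> y _ yw; rewrite /phi4 /recolour (negbTE yw).
have cn4sub : forall y, y \in cn w c phi4 -> y = u \/ y = x.
  move=> y; rewrite inE /phi4 /recolour; case: (eqVneq y w) => [->|yw]; first by rewrite eirr.
  rewrite /phi3 /recolour; case: (eqVneq y u) => [->|yu]; first by left.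
  by move=> h; right; apply: allx; rewrite inE.
have card4 : #|cn w c phi4| <= #|cn w c phi1| + 1.
  apply: leq_trans (_ : #|u |: cn w c phi2| <= _).
    apply: subset_leq_card; apply/subsetP => y /[dup] yin /cn4sub [->|->].
      by rewrite in_setU1 eqxx.
    by rewrite in_setU1 xin2 orbT.
  by rewrite cardsU1 cnE2 addnC leq_add2l leq_b1.
have [phi5 [R5 cl5 cp5 F5]] := @phaseA w c _ phi4 (leqnn _) cp4.
have R5A : Reach A alpha phi5 (#|cn w c alpha| - #|cn w c phi1| + k.-1 + 1 + 1 +
                               (#|cn w c phi4| - #|cn w c phi5|)).
  by apply: (Reach_trans R4A R5) => y; apply: cnA R4A y.
have pw5 : phi5 w = phi4 w by apply: (Reach_agree R5); rewrite /= inE eirr.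
have pw4 : phi4 w = b by rewrite /phi4 /recolour eqxx.
have cn5 : c != phi5 w by rewrite pw5 pw4 eq_sym.
have cn5u : forall y, y \in cn w c phi5 -> y = u.
  move=> y /F5 [/cn4sub [//|->] fr _]; by case: xuf4.
case: (boolP (u \in cn w c phi5)) => [u5|nu5]; last first.
  apply: (fin _ _ R5A cn5); last by slia.
  by left => y /[dup] yin /cn5u yu; move: nu5; rewrite -yu yin.
have [_ _ ufr5] := F5 u u5.
have k2 : 1 < k.
  rewrite ltnNge; apply/negP => k1'.
  have k1e : k = 1 by slia.
  have uv : u = v by rewrite /u k1e.
  by apply: (vU phi5); rewrite -uv.
set u' := nth v P k.-2.
have [phi6 [R6 U6]] := claimA vU (take_path k.-2 pp) cp5.
have k2le : k.-2 <= size p by slia.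
rewrite last_take_nth // -/u' in U6.
rewrite size_takel // in R6.
have far2 : forall y, y \in belast v (take k.-2 p) ->
    [/\ y != w, ~~ e w y, y != u & ~~ e u y].
  move=> y /(belast_take_pos k2le) [j jl ->].
  have jk : j <= k by slia.
  have kk : k <= k by [].
  have kk1 : k.-1 <= k by slia.
  have nk : ~ k <= j.+1 by move=> h2; slia.
  have nk1 : ~ k.-1 <= j.+1 by move=> h2; slia.
  split.
  - by apply/eqP => h; apply: nk; apply: far jk kk _; left; rewrite /P h nodek.
  - by apply/negP => h; apply: nk; apply: far jk kk _; right; rewrite /P nodek esym.
  - by apply/eqP => h; apply: nk1; apply: far jk kk1 _; left; rewrite /P h.
  - by apply/negP => h; apply: nk1; apply: far jk kk1 _; right; rewrite /P esym.
have agree6 : forall y, [|| y == w, e w y, y == u | e u y] -> phi6 y = phi5 y.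
  move=> y hy; apply: (Reach_agree R6); apply/negP => /far2 [h1 h2 h3 h4].
  by move: hy; rewrite (negbTE h1) (negbTE h2) (negbTE h3) (negbTE h4).
have R6' : Reach A phi5 phi6 k.-2.
  apply: (Reach_mono R6 _ (leqnn _)) => y yin.
  have := belast_take_mem k2le yin => yP.
  by rewrite inE yP.
have R6A := Reach_trans R5A R6' (fun y h => h).
have cp6 := Reach_col cp5 R6.
have cnE6 : cn w c phi6 = cn w c phi5.
  by apply/setP => y; rewrite !inE; case ewy: (e w y) => //=; rewrite agree6 // ewy orbT.
have ufr6 : frozen e L phi6 u.
  apply: frozen_local ufr5; first by apply: agree6; rewrite eqxx !orbT.
  by move=> y euy; apply: agree6; rewrite euy !orbT.
have pw6 : phi6 w = phi5 w by apply: agree6; rewrite eqxx.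
have u'u : e u' u.
  have := edge k.-2 (_ : k.-2 < k); rewrite -/u'.
  have -> : k.-2.+1 = k.-1 by slia.
  by apply; slia.
have u'P : u' \in P by apply: PS; slia.
have [u'w nwu'] : u' != w /\ ~~ e w u'.
  have kk : k <= k by [].
  have jk : k.-2 <= k by slia.
  have nk : ~ k <= k.-2.+1 by move=> h2; slia.
  split.
    by apply/eqP => h; apply: nk; apply: far jk kk _; left; rewrite /P -/u' h nodek.
  by apply/negP => h; apply: nk; apply: far jk kk _; right; rewrite /P -/u' nodek esym.
have [t [tL tn tfa]] := spare_of U6.
have cp7 := recolour_col cp6 tL tfa.
set phi7 := recolour phi6 u' t.
have R7A := Reach_trans R6A (Reach_step (A := A) (_ : A u') tn cp7) (fun y h => h).
have uu' : u != u' by apply/eqP => h; move: u'u; rewrite h eirr.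
have uuf7 : unfrozen e L phi7 u.
  apply: (frozen_change_unf cp6 ufr6 (z := u')).
  - by rewrite esym.
  - by rewrite /phi7 /recolour (negbTE uu').
  - by rewrite /phi7 /recolour eqxx.
  - by move=> y _ yu; rewrite /phi7 /recolour (negbTE yu).
have cnE7 : cn w c phi7 = cn w c phi6.
  apply/setP => y; rewrite !inE /phi7 /recolour; case: (eqVneq y u') => [->|//].
  by rewrite (negbTE nwu').
have wu' : w != u' by rewrite eq_sym.
have pw7 : phi7 w = phi6 w by rewrite /phi7 /recolour (negbTE wu').
have cn7 : c != phi7 w by rewrite pw7 pw6.
apply: (fin _ _ (R7A _) cn7); last by rewrite cnE7 cnE6; slia.
  by rewrite inE u'P.
by left => y; rewrite cnE7 cnE6 => /cn5u ->.
Qed.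

End Work.

Theorem mainTheorem7 (T C : finType) (e : rel T) (L : T -> {set C}) (v w : T)
    (alpha beta : T -> C) (p : seq T) :
  simple_graph e -> connected_graph e ->
  (forall u, deg e u + 1 <= #|L u|) -> deg e v + 2 <= #|L v| ->
  Lcolouring e L alpha -> unfrozen_colouring e L alpha ->
  Lcolouring e L beta -> unfrozen_colouring e L beta ->
  shortest_path e v w p ->
  exists s : seq (T * C),
    recol_seq e L alpha s /\
    recol_final alpha s w = beta w /\
    unfrozen e L (recol_final alpha s) v /\
    (forall st, st \in s ->
       (st.1 \in v :: p) \/ (e w st.1 /\ alpha st.1 = beta w)) /\
    size s <= deg e w + 2 + 2 * size (v :: p).
Proof.
move=> [esym eirr] _ Lbig hv ca _ cb _ sp.
have [gamma [[s [rs [fs [zs As]]]] gw]] :=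
  main_reach esym eirr Lbig (c := beta w) hv ca (cb.1 w) sp.
exists s; split => //; split; first by rewrite fs.
split; first exact: big_unfrozen.
split => //.
move=> st /As /orP [->|/andP [h1 /eqP h2]]; [by left | by right].
Qed.
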